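(* Let $\Lambda$ be a finitely aligned left cancellative small category. Suppose $\alpha,\beta\in\Lambda$ with $s(\alpha)=s(\beta)$ and $\alpha\beta^*\in S_\Lambda^{\mathrm{Iso}}$, and that $\delta\in\Lambda$ satisfies $\delta\Lambda\subseteq\alpha\Lambda\cap\beta\Lambda$. Then $\delta^*\alpha\beta^*\delta=\bigcup_{i=1}^n\delta_i\alpha_i^*$ for some $\delta_i,\alpha_i\in\Lambda$ such that $\{\delta_i\}_{i=1}^n$ and $\{\alpha_i\}_{i=1}^n$ are exhaustive, and hence $\delta^*\alpha\beta^*\delta\in F_\Lambda$.
   Context: $\Lambda$ is a left cancellative small category (objects $\Lambda^0$, range $r$, source $s$), finitely aligned (each $\alpha\Lambda\cap\beta\Lambda$ is a finite union of $f\Lambda$'s, $\alpha\Lambda=\{\alpha\beta:s(\alpha)=r(\beta)\}$). Each $\alpha\in\Lambda$ is the partial bijection $s(\alpha)\Lambda\to\alpha\Lambda$, $\beta\mapsto\alpha\beta$, in the symmetric inverse monoid $\mathcal{I}(\Lambda)$, with inverse $\alpha^*$; $S_\Lambda$ is the inverse semigroup they generate; $\bigcup$ is union of partial maps. $S_\Lambda^{\mathrm{Iso}}=\{s:ses^*e\neq0\text{ for every idempotent }0\neq e\leqslant s^*s\}$. For $x\in\Lambda^0$, $B\subseteq x\Lambda$ is exhaustive (at $x$) if every $\alpha\in x\Lambda$ has $\alpha\Lambda\cap\beta\Lambda\neq\emptyset$ for some $\beta\in B$. $F_\Lambda=\{\bigcup_{i=1}^n\alpha_i\beta_i^*\in S_\Lambda^{\mathrm{Iso}}:\alpha_i,\beta_i\in\Lambda,\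 \{\alpha_i\},\{\beta_i\}\text{ exhaustive}\}\cup\{0\}$. *)

(* Defs.v *)
From Stdlib Require Import List.
Import ListNotations.

(** A small category with range [rng] and source [src]; [cmp a b] is the
    composite "a b" (first b, then a), meaningful when [src a = rng b]. *)
Record Cat := {
  Ob : Type;
  Mor : Type;
  rng : Mor -> Ob;
  src : Mor -> Ob;
  cmp : Mor -> Mor -> Mor;
  idm : Ob -> Mor;
  rng_cmp : forall a b, src a = rng b -> rng (cmp a b) = rng a;
  src_cmp : forall a b, src a = rng b -> src (cmp a b) = src b;
  cmpA : forall a b c, src a = rng b -> src b = rng c ->
           cmp (cmp a b) c = cmp a (cmp b c);
  rng_idm : forall x, rng (idm x) = x;
  src_idm : forall x, src (idm x) = x;
  idm_l : forall a, cmp (idm (rng a)) a = a;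
  idm_r : forall a, cmp a (idm (src a)) = a
}.

Section Defs.
Variable L : Cat.
Notation M := (Mor L).

Definition left_cancellative : Prop :=
  forall a b c, src L a = rng L b -> src L a = rng L c ->
    cmp L a b = cmp L a c -> b = c.

Definition mset (a : M) : M -> Prop :=
  fun g => exists b, src L a = rng L b /\ g = cmp L a b.

Definition oset (x : Ob L) : M -> Prop := fun g => rng L g = x.

Definition finitely_aligned : Prop :=
  forall a b, exists fs : list M,
    forall g, (mset a g /\ mset b g) <-> exists f, In f fs /\ mset f g.

(** Partial maps on M represented by their graphs: [p x y] means p(x) = y. *)
Definition pmap := M -> M -> Prop.

Definition emb (a : M) : pmap :=
  fun x y => src L a = rng L x /\ y = cmp L a x.

Definition pinv (p : pmap) : pmap := fun x y => p y x.

(** product p q = "p after q" *)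
Definition pmul (p q : pmap) : pmap := fun x z => exists y, q x y /\ p y z.

Definition pzero : pmap := fun _ _ => False.

Definition punion (ps : list pmap) : pmap :=
  fun x y => exists p, In p ps /\ p x y.

Inductive S_L : pmap -> Prop :=
  | S_gen : forall a, S_L (emb a)
  | S_inv : forall p, S_L p -> S_L (pinv p)
  | S_mul : forall p q, S_L p -> S_L q -> S_L (pmul p q).

Definition idempotent (e : pmap) : Prop := S_L e /\ pmul e e = e.

Definition ple (e f : pmap) : Prop := e = pmul f e.

Definition S_Iso (s : pmap) : Prop :=
  S_L s /\
  forall e, idempotent e -> e <> pzero -> ple e (pmul (pinv s) s) ->
    pmul (pmul (pmul s e) (pinv s)) e <> pzero.

Definition exhaustive_at (x : Ob L) (B : list M) : Prop :=
  (forall b, In b B -> oset x b) /\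
  forall a, oset x a -> exists b, In b B /\ exists g, mset a g /\ mset b g.

Definition exhaustive (B : list M) : Prop := exists x, exhaustive_at x B.

Definition usum (l : list (M * M)) : pmap :=
  punion (map (fun ab => pmul (emb (fst ab)) (pinv (emb (snd ab)))) l).

Definition F_L (t : pmap) : Prop :=
  t = pzero \/
  exists l : list (M * M),
    t = usum l /\ S_Iso t /\ exhaustive (map fst l) /\ exhaustive (map snd l).

End Defs.

(* Main.v *)
Require Import Defs.
From Stdlib Require Import List.
From Stdlib Require Import FunctionalExtensionality PropExtensionality Classical.
Import ListNotations.

Lemma rel_ext {A B : Type} (p q : A -> B -> Prop) :
  (forall x y, p x y <-> q x y) -> p = q.
Proof.
  intros H. apply functional_extensionality; intro x.
  apply functional_extensionality; intro y.
  apply propositional_extensionality. apply H.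
Qed.

Lemma S_fi (L : Cat) (hlc : left_cancellative L) p : S_L L p ->
  (forall x y y', p x y -> p x y' -> y = y') /\
  (forall x x' y, p x y -> p x' y -> x = x').
Proof.
  induction 1 as [a|p _ [F I]|p q _ [F1 I1] _ [F2 I2]].
  - split.
    + intros x y y' [_ e1] [_ e2]. subst. reflexivity.
    + intros x x' y [h1 e1] [h2 e2]. subst y. eapply hlc; eauto.
  - unfold pinv; split; intros ? ? ? h1 h2; [eapply I|eapply F]; eassumption.
  - split.
    + intros x z z' [y1 [h1 h2]] [y2 [h3 h4]].
      assert (y1 = y2) by (eapply F2; eauto). subst. eapply F1; eauto.
    + intros x x' z [y1 [h1 h2]] [y2 [h3 h4]].
      assert (y1 = y2) by (eapply I1; eauto). subst. eapply I2; eauto.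
Qed.

Lemma idem_id (L : Cat) (hlc : left_cancellative L) e : S_L L e -> pmul L e e = e ->
  forall x y, e x y -> x = y.
Proof.
  intros HS He x y H. destruct (S_fi L hlc e HS) as [F I].
  assert (H2 : pmul L e e x y) by (rewrite He; exact H).
  destruct H2 as [m [h1 h2]]. assert (m = y) by (eapply F; eauto). subst m.
  eapply I; eauto.
Qed.

Lemma mset_refl (L : Cat) f : mset L f f.
Proof.
  exists (idm L (src L f)). split. symmetry; apply rng_idm. symmetry; apply idm_r.
Qed.

Lemma core (L : Cat) (hlc : left_cancellative L) (a b d : Mor L)
  (hs : src L a = src L b)
  (hiso : S_Iso L (pmul L (emb L a) (pinv L (emb L b))))
  (hd : forall g, mset L d g -> mset L a g /\ mset L b g)
  (e : pmap L) : S_L L e -> (forall x y, e x y -> x = y) ->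
  forall u0, e u0 u0 -> src L d = rng L u0 ->
  exists u u' v, e u u /\ e u' u' /\ src L d = rng L u /\ src L d = rng L u' /\
    src L b = rng L v /\ cmp L d u' = cmp L b v /\ cmp L a v = cmp L d u.
Proof.
  intros HS Hid u0 Hu0 Hsu0.
  set (e' := pmul L (pmul L (emb L d) e) (pinv L (emb L d))).
  assert (char : forall x y, e' x y <-> x = y /\ exists m, e m m /\ src L d = rng L m /\ x = cmp L d m).
  { intros x y; split.
    - intros [y1 [[h1 h2] [y2 [h3 [h4 h5]]]]].
      assert (y1 = y2) by (apply Hid; auto). subst. split; [reflexivity|].
      exists y2; auto.
    - intros [-> [m [h1 [h2 h3]]]]. subst. exists m. split. split; auto.
      exists m. split; auto. split; auto. }
  destruct hiso as [_ Hi].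
  assert (Hide : idempotent L e').
  { split.
    - apply S_mul; [apply S_mul; [apply S_gen|assumption] | apply S_inv, S_gen].
    - apply rel_ext; intros x y; split.
      + intros [y1 [h1 h2]]. apply char in h1. apply char in h2.
        destruct h1 as [<- hm]. destruct h2 as [<- _]. apply char; auto.
      + intros h. exists x. split; [|exact h]. apply char in h.
        destruct h as [_ hm]. apply char; auto. }
  assert (Hnz : e' <> pzero L).
  { intros Hz. assert (H : e' (cmp L d u0) (cmp L d u0)) by (apply char; split; eauto).
    rewrite Hz in H. exact H. }
  assert (Hple : ple L e' (pmul L (pinv L (pmul L (emb L a) (pinv L (emb L b))))
                               (pmul L (emb L a) (pinv L (emb L b))))).
  { unfold ple. apply rel_ext; intros x y; split.
    - intros h. exists x. split.
      + apply char in h. destruct h as [_ hm]. apply char; auto.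
      + apply char in h. destruct h as [<- [m [h1 [h2 h3]]]].
        destruct (hd x) as [_ [v [hv1 hv2]]]. { exists m. auto. }
        exists (cmp L a v). split.
        * exists v. split. split; auto. split; [congruence|reflexivity].
        * exists v. split. split; auto. split; [congruence|reflexivity].
    - intros [m [h1 [k [[v [[hv1 hv2] [hv3 hv4]]] [v' [[hw1 hw2] [hw3 hw4]]]]]]].
      assert (v = v').
      { eapply hlc. 2: exact hw3. congruence. congruence. }
      subst. assumption. }
  specialize (Hi e' Hide Hnz Hple).
  apply NNPP; intro Hno. apply Hi.
  apply rel_ext; intros x z; split; [|intros []]. intro H. exfalso. apply Hno.
  destruct H as [y [h1 [w [h2 [t [h3 h4]]]]]].
  apply char in h1. destruct h1 as [<- [m1 [hm1 [hm1' ->]]]].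
  apply char in h3. destruct h3 as [<- [m2 [hm2 [hm2' ->]]]].
  destruct h2 as [v [[hv1 hv2] [hv3 hv4]]].
  exists m1, m2, v. repeat split; auto.
Qed.

Lemma T_raw (L : Cat) (a b d : Mor L) (hs : src L a = src L b) x z :
  pmul L (pmul L (pmul L (pinv L (emb L d)) (emb L a)) (pinv L (emb L b))) (emb L d) x z
  <-> exists v, src L d = rng L x /\ src L d = rng L z /\ src L b = rng L v /\
         cmp L d x = cmp L b v /\ cmp L a v = cmp L d z.
Proof.
  split.
  - intros [y1 [[h1 ->] [y2 [[h2 h3] [y3 [[h4 ->] [h5 h6]]]]]]].
    exists y2. repeat split; auto.
  - intros [v [h1 [h2 [h3 [h4 h5]]]]].
    exists (cmp L d x). split. split; auto.
    exists v. split. split; auto.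
    exists (cmp L a v). split. split; [congruence|reflexivity]. split; auto.
Qed.

Lemma T_char (L : Cat) (hlc : left_cancellative L) (a b d a' b' : Mor L)
  (hs : src L a = src L b)
  (ha1 : src L a = rng L a') (ha2 : d = cmp L a a')
  (hb1 : src L b = rng L b') (hb2 : d = cmp L b b') x z :
  pmul L (pmul L (pmul L (pinv L (emb L d)) (emb L a)) (pinv L (emb L b))) (emb L d) x z
  <-> src L d = rng L x /\ src L d = rng L z /\ cmp L b' x = cmp L a' z.
Proof.
  assert (sa : src L d = src L a') by (rewrite ha2; apply src_cmp; auto).
  assert (sb : src L d = src L b') by (rewrite hb2; apply src_cmp; auto).
  rewrite T_raw by auto. split.
  - intros [v [h1 [h2 [h3 [h4 h5]]]]]. split; auto. split; auto.
    assert (E1 : cmp L b' x = v).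
    { apply (hlc b). 3: { rewrite <- cmpA by congruence. rewrite <- hb2. exact h4. }
      rewrite rng_cmp by congruence. auto. auto. }
    assert (E2 : cmp L a' z = v).
    { apply (hlc a). 3: { rewrite <- cmpA by congruence. rewrite <- ha2. symmetry. exact h5. }
      rewrite rng_cmp by congruence. auto. congruence. }
    congruence.
  - intros [h1 [h2 h3]]. exists (cmp L b' x). split; auto. split; auto. split.
    { rewrite rng_cmp by congruence. auto. }
    split.
    + rewrite hb2 at 1. apply cmpA; congruence.
    + rewrite h3. rewrite ha2. symmetry. apply cmpA; congruence.
Qed.

Lemma choose_list {A B : Type} (R : A -> B -> Prop) (fs : list A) :
  (forall f, In f fs -> exists p, R f p) ->
  exists l, (forall p, In p l -> exists f, In f fs /\ R f p) /\
            (forall f, In f fs -> exists p, In p l /\ R f p).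
Proof.
  induction fs as [|f fs IH]; intros H.
  - exists []. split; intros ? [].
  - destruct (H f (or_introl eq_refl)) as [p Hp].
    destruct IH as [l [H1 H2]]. { intros g Hg. apply H. right. exact Hg. }
    exists (p :: l). split.
    + intros q [<-|Hq]. exists f. split; auto. left; auto.
      destruct (H1 q Hq) as [g [? ?]]. exists g. split; auto. right; auto.
    + intros g [<-|Hg]. exists p. split; auto. left; auto.
      destruct (H2 g Hg) as [q [? ?]]. exists q. split; auto. right; auto.
Qed.

Theorem lemma4p9 (L : Cat) (hlc : left_cancellative L) (hfa : finitely_aligned L)
  (a b d : Mor L) (hs : src L a = src L b)
  (hiso : S_Iso L (pmul L (emb L a) (pinv L (emb L b))))
  (hd : forall g, mset L d g -> mset L a g /\ mset L b g) :
  (exists l : list (Mor L * Mor L),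
     pmul L (pmul L (pmul L (pinv L (emb L d)) (emb L a)) (pinv L (emb L b))) (emb L d)
       = usum L l /\
     exhaustive L (map fst l) /\ exhaustive L (map snd l)) /\
  F_L L (pmul L (pmul L (pmul L (pinv L (emb L d)) (emb L a)) (pinv L (emb L b))) (emb L d)).
Proof.
  destruct (hd d (mset_refl L d)) as [[a' [ha1 ha2]] [b' [hb1 hb2]]].
  assert (sa : src L d = src L a') by (rewrite ha2; apply src_cmp; auto).
  assert (sb : src L d = src L b') by (rewrite hb2; apply src_cmp; auto).
  pose proof (T_char L hlc a b d a' b' hs ha1 ha2 hb1 hb2) as TC.
  pose proof (T_raw L a b d hs) as TR.
  set (T := pmul L (pmul L (pmul L (pinv L (emb L d)) (emb L a)) (pinv L (emb L b))) (emb L d)) in *.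
  destruct (hfa b' a') as [fs Hfs].
  set (R := fun (f : Mor L) (p : Mor L * Mor L) =>
        src L a' = rng L (fst p) /\ src L b' = rng L (snd p) /\
        f = cmp L a' (fst p) /\ f = cmp L b' (snd p)).
  destruct (choose_list R fs) as [l [Hl1 Hl2]].
  { intros f Hf. destruct (proj2 (Hfs f) (ex_intro _ f (conj Hf (mset_refl L f))))
      as [[b2 [hb3 hb4]] [a2 [ha3 ha4]]].
    exists (a2, b2). unfold R; simpl; auto. }
  assert (Hdec : forall x z, src L d = rng L x -> src L d = rng L z ->
             cmp L b' x = cmp L a' z ->
             exists p w, In p l /\ src L (snd p) = rng L w /\ src L (fst p) = rng L w /\
               x = cmp L (snd p) w /\ z = cmp L (fst p) w).
  { intros x z h1 h2 h3.
    destruct (proj1 (Hfs (cmp L b' x))) as [f [Hf [w [hw1 hw2]]]].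
    { split. exists x; split; congruence. exists z; split; congruence. }
    destruct (Hl2 f Hf) as [[p1 p2] [Hp [r1 [r2 [r3 r4]]]]]. simpl in *.
    assert (s1 : src L f = src L p1) by (rewrite r3; apply src_cmp; auto).
    assert (s2 : src L f = src L p2) by (rewrite r4; apply src_cmp; auto).
    exists (p1, p2), w. simpl. split; auto. split; [congruence|]. split; [congruence|].
    split.
    - apply (hlc b'). congruence. rewrite rng_cmp by congruence. auto.
      rewrite hw2, r4. apply cmpA; congruence.
    - apply (hlc a'). congruence. rewrite rng_cmp by congruence. auto.
      rewrite <- h3, hw2, r3. apply cmpA; congruence. }
  assert (HU : T = usum L l).
  { apply rel_ext; intros x z. rewrite TC. split.
    - intros [h1 [h2 h3]]. destruct (Hdec x z h1 h2 h3) as [p [w [Hp [w1 [w2 [w3 w4]]]]]].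
      exists (pmul L (emb L (fst p)) (pinv L (emb L (snd p)))). split.
      + apply (in_map (fun ab => pmul L (emb L (fst ab)) (pinv L (emb L (snd ab))))). auto.
      + exists w. split; split; auto.
    - intros [q [Hq Hqx]]. apply in_map_iff in Hq. destruct Hq as [[p1 p2] [<- Hp]].
      destruct Hqx as [w [[w1 w2] [w3 w4]]]. simpl in *.
      destruct (Hl1 _ Hp) as [f [Hf [r1 [r2 [r3 r4]]]]]. simpl in *. subst x z.
      split. rewrite rng_cmp by auto. congruence.
      split. rewrite rng_cmp by auto. congruence.
      rewrite <- !cmpA by congruence. congruence. }
  assert (Hex : forall g, rng L g = src L d -> exists p, In p l /\
             (exists h, mset L g h /\ mset L (fst p) h) /\
             (exists h, mset L g h /\ mset L (snd p) h)).
  { intros g Hg.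
    set (e := pmul L (emb L g) (pinv L (emb L g))).
    assert (Hid : forall x y, e x y -> x = y).
    { intros x y [m [[h1 h2] [h3 h4]]]. congruence. }
    assert (Hgg : e g g).
    { exists (idm L (src L g)). split; split; try (rewrite rng_idm; auto); symmetry; apply idm_r. }
    destruct (core L hlc a b d hs hiso hd e (S_mul _ _ _ (S_gen _ _) (S_inv _ _ (S_gen _ _)))
                Hid g Hgg (eq_sym Hg)) as [u [u' [v [hu [hu' [s1 [s2 [s3 [e1 e2]]]]]]]]].
    assert (HT : T u' u) by (apply TR; exists v; auto).
    apply TC in HT. destruct HT as [_ [_ HT]].
    destruct (Hdec u' u s2 s1 HT) as [p [w [Hp [w1 [w2 [w3 w4]]]]]].
    exists p. split; auto.
    destruct hu as [m [[m1 m2] _]]. destruct hu' as [m' [[m1' m2'] _]].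
    split.
    - exists u. split. exists m; auto. exists w; auto.
    - exists u'. split. exists m'; auto. exists w; auto. }
  assert (HE1 : exhaustive L (map fst l)).
  { exists (src L d). split.
    - intros q Hq. apply in_map_iff in Hq. destruct Hq as [p [<- Hp]].
      destruct (Hl1 p Hp) as [f [_ [r1 _]]]. unfold oset. congruence.
    - intros g Hg. destruct (Hex g Hg) as [p [Hp [H1 _]]].
      exists (fst p). split; auto. apply in_map; auto. }
  assert (HE2 : exhaustive L (map snd l)).
  { exists (src L d). split.
    - intros q Hq. apply in_map_iff in Hq. destruct Hq as [p [<- Hp]].
      destruct (Hl1 p Hp) as [f [_ [_ [r2 _]]]]. unfold oset. congruence.
    - intros g Hg. destruct (Hex g Hg) as [p [Hp [_ H2]]].
      exists (snd p). split; auto. apply in_map; auto. }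
  assert (HI : S_Iso L T).
  { split.
    - unfold T. apply S_mul; [apply S_mul; [apply S_mul; [apply S_inv, S_gen|apply S_gen]|apply S_inv, S_gen]|apply S_gen].
    - intros e [HeS HeI] Hnz Hple.
      pose proof (idem_id L hlc e HeS HeI) as Hid.
      assert (Hxy : exists x y, e x y).
      { apply NNPP; intro N. apply Hnz. apply rel_ext; intros x y; split;
          [intro; apply N; eauto | intros []]. }
      destruct Hxy as [x [y Hxy]]. pose proof (Hid _ _ Hxy) as <-.
      assert (Hsx : src L d = rng L x).
      { assert (H : pmul L (pmul L (pinv L T) T) e x x) by (rewrite <- Hple; exact Hxy).
        destruct H as [m [h1 [k [h2 h3]]]]. apply Hid in h1. subst m.
        apply TR in h2. destruct h2 as [v [? _]]. auto. }
      destruct (core L hlc a b d hs hiso hd e HeS Hid x Hxy Hsx)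
        as [u [u' [v [hu [hu' [s1 [s2 [s3 [e1 e2]]]]]]]]].
      assert (HT : T u' u) by (apply TR; exists v; auto).
      intro Hz.
      assert (H : pmul L (pmul L (pmul L T e) (pinv L T)) e u u).
      { exists u. split; auto. exists u'. split; auto. exists u'. split; auto. }
      rewrite Hz in H. exact H. }
  split.
  - exists l. auto.
  - right. exists l. auto.
Qed.
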